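(* Under the standing setting and the standing parameter choice described in the context, let $\{\hat\omega^k\}=\{(x^k,\xi^k,\hat x^k,\xi^{k-1})\}$ be generated by iBPDCA and assume it is bounded. For each $k$ define $\upsilon^{k+1}=(\upsilon^{k+1}_x,\upsilon^{k+1}_\xi,\upsilon^{k+1}_{\hat x},\upsilon^{k+1}_\zeta)$ by $\upsilon^{k+1}_{x}=\nabla h^-(\hat{x}^k)-\nabla h^-(x^{k+1})+2\delta(x^{k+1}-\hat{x}^{k+1})-\tau(\nabla\psi(x^{k+1})-\nabla\psi(\hat{x}^k))$, $\upsilon^{k+1}_{\xi}=\hat{x}^k-x^k+\frac{1}{\alpha_{k+1}}(x^{k+1}-\hat{x}^{k+1})+(2\eta-\beta)(\xi^{k+1}-\xi^k)$, $\upsilon^{k+1}_{\hat{x}}=-2\delta(x^{k+1}-\hat{x}^{k+1})$, $\upsilon^{k+1}_{\zeta}=2\eta(\xi^{k}-\xi^{k+1})$. Then $\upsilon^{k+1}\in\partial\hat\Theta(\hat\omega^{k+1})$, and there exists $\theta>0$ such that for all $k$ $$\operatorname{dist}(0,\partial \hat{\Theta}(\hat{\omega}^{k+1}))\leq \theta\big(\|x^{k}-\hat{x}^{k}\|+\|x^{k+1}-\hat{x}^{k+1}\|+\|\xi^{k+1}-\xi^k\| \big).$$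
   Context: Problem: minimize $\Phi(x)=f(x)-g(x)+h(x)$ over $x\in\mathbb{R}^n$, where: $f:\mathbb{R}^n\to(-\infty,\infty]$ is proper, lower semicontinuous and convex; $g:\mathbb{R}^n\to\mathbb{R}$ is convex and continuous; $h=h^+-h^-$ where $h^+,h^-:\mathbb{R}^n\to\mathbb{R}$ are differentiable with Lipschitz continuous gradients of moduli $L_h^+$ and $L_h^-$ respectively (not necessarily convex); and $\inf_x\Phi(x)>-\infty$. $g^*$ is the convex conjugate of $g$. Kernel: $\psi:\mathbb{R}^n\to\mathbb{R}$ is differentiable, $\rho$-strongly convex ($\rho>0$), with $\nabla\psi$ Lipschitz continuous with modulus $L_\psi$; $\mathscr{B}_\psi(x,y)=\psi(x)-\psi(y)-\langle\nabla\psi(y),x-y\rangle$. Algorithm (iBPDCA): choose $x^0,\xi^0\in\mathbb{R}^n$, set $x^{-1}=x^0$, $\{\alpha_k\}\subseteq[\alpha_{\min},1]$ with $0<\alpha_{\min}<1$, $\beta>1/2$, $\tau>0$. For $k=0,1,\dots$: $\hat x^k=x^k+\alpha_k(x^k-x^{k-1})$; $\xi^{k+1}=\arg\min_{\xi}\{g^*(\xi)-\langle\hat x^k,\xi\rangle+\frac{\beta}{2}\|\xi-\xi^k\|^2\}$; $x^{k+1}\in\arg\min_{x}\{f(x)+h^+(x)-\langle x-\hat x^k,\ \xi^{k+1}+\nabla h^-(\hat x^k)\rangle+\tau\mathscr{B}_\psi(x,\hat x^k)\}$ (assumed to exist). $\Theta(x,\xi)=f(x)+g^*(\xi)-\langle\xi,x\rangle+h^+(x)-h^-(x)$;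 merit function $\hat\Theta(x,\xi,\hat x,\zeta)=\Theta(x,\xi)+\delta\|x-\hat x\|^2+\eta\|\xi-\zeta\|^2$ on $\mathbb{R}^n\times\mathbb{R}^n\times\mathbb{R}^n\times\mathbb{R}^n$; $\hat\omega^k=(x^k,\xi^k,\hat x^k,\xi^{k-1})$. $\partial$ denotes the limiting (Mordukhovich) subdifferential, and $\operatorname{dist}(0,S)=\inf_{s\in S}\|s\|$. Standing parameter choice: $\epsilon\in(0,1)$, $\beta>1/2$, and $\delta,\tau,\eta$ satisfy $\delta=\frac{\tau L_\psi-L_h^-}{2[(1-\epsilon)+(1+\epsilon)\alpha_{\min}^2]}$, $\tau=\frac{2(L_h^-)^2+L_h^-+1+2(1+\epsilon)\delta}{2\rho}$, $\eta=\frac{2\beta-1}{2(1+\epsilon)}$, with $L_h^-<\tau L_\psi$. *)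

(* Defs.v *)
From HB Require Import structures.
From mathcomp Require Import all_boot all_order all_algebra.
From mathcomp Require Import all_classical all_reals all_analysis.

Set Implicit Arguments.
Unset Strict Implicit.
Unset Printing Implicit Defensive.

Import Order.TTheory GRing.Theory Num.Theory.
Import numFieldNormedType.Exports.
Local Open Scope ring_scope.
Local Open Scope classical_set_scope.

Section Defs.
Variable R : realType.

Definition vdot n (x y : 'rV[R]_n) : R := \sum_(i < n) x ord0 i * y ord0 i.
Definition vnorm n (x : 'rV[R]_n) : R := Num.sqrt (vdot x x).

Definition quad n := ('rV[R]_n * 'rV[R]_n * 'rV[R]_n * 'rV[R]_n)%type.
Definition ip4 n (w1 w2 : quad n) : R :=
  vdot w1.1.1.1 w2.1.1.1 + vdot w1.1.1.2 w2.1.1.2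
  + vdot w1.1.2 w2.1.2 + vdot w1.2 w2.2.

Definition ipnorm (V : zmodType) (ip : V -> V -> R) (v : V) : R :=
  Num.sqrt (ip v v).

(* Frechet (regular) subdifferential: F x finite and
   liminf_{y -> x, y <> x} (F y - F x - <v, y - x>) / ||y - x|| >= 0,
   written out in epsilon-delta form. *)
Definition frechet_subdiff (V : zmodType) (ip : V -> V -> R)
    (F : V -> \bar R) (x v : V) : Prop :=
  F x \is a fin_num /\
  forall e : R, 0 < e -> exists2 d : R, 0 < d &
    forall y : V, ipnorm ip (y - x) < d ->
      (F x + (ip v (y - x) - e * ipnorm ip (y - x))%:E <= F y)%E.

Definition limiting_subdiff (V : zmodType) (ip : V -> V -> R)
    (F : V -> \bar R) (x v : V) : Prop :=
  F x \is a fin_num /\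
  exists (xs vs : nat -> V),
    [/\ (fun k => ipnorm ip (xs k - x)) @ \oo --> (0 : R),
        (fun k => F (xs k)) @ \oo --> F x,
        (forall k, frechet_subdiff ip F (xs k) (vs k)) &
        (fun k => ipnorm ip (vs k - v)) @ \oo --> (0 : R)].

(* dist(0, S) = inf_{s in S} ||s|| (= +oo if S is empty) *)
Definition dist0 (V : zmodType) (ip : V -> V -> R) (S : set V) : \bar R :=
  ereal_inf [set (ipnorm ip v)%:E | v in S].

Definition has_gradient n (F : 'rV[R]_n -> R) (G : 'rV[R]_n -> 'rV[R]_n) :=
  forall x (e : R), 0 < e -> exists2 d : R, 0 < d &
    forall y, vnorm (y - x) < d ->
      `|F y - F x - vdot (G x) (y - x)| <= e * vnorm (y - x).

Definition lipschitz_with n (G : 'rV[R]_n -> 'rV[R]_n) (L : R) :=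
  forall x y, vnorm (G x - G y) <= L * vnorm (x - y).

Definition convex_fun n (F : 'rV[R]_n -> R) :=
  forall x y (l : R), 0 < l < 1 ->
    F (l *: x + (1 - l) *: y) <= l * F x + (1 - l) * F y.

Definition strongly_convex n (F : 'rV[R]_n -> R) (rho : R) :=
  forall x y (l : R), 0 < l < 1 ->
    F (l *: x + (1 - l) *: y) <=
      l * F x + (1 - l) * F y - rho / 2 * l * (1 - l) * vnorm (x - y) ^+ 2.

Definition continuous_fun n (F : 'rV[R]_n -> R) :=
  forall x (e : R), 0 < e -> exists2 d : R, 0 < d &
    forall y, vnorm (y - x) < d -> `|F y - F x| < e.

Definition proper_fun n (F : 'rV[R]_n -> \bar R) :=
  (forall x, F x != -oo%E) /\ exists x, F x != +oo%E.

Definition lsc_fun n (F : 'rV[R]_n -> \bar R) :=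
  forall x (t : R), (t%:E < F x)%E -> exists2 d : R, 0 < d &
    forall y, vnorm (y - x) < d -> (t%:E < F y)%E.

Definition econvex_fun n (F : 'rV[R]_n -> \bar R) :=
  forall x y : 'rV[R]_n, forall l : R, 0 < l < 1 ->
    (F (l *: x + (1 - l) *: y)%R <= l%:E * F x + (1 - l)%:E * F y)%E.

Definition conjugate n (g : 'rV[R]_n -> R) (xi : 'rV[R]_n) : \bar R :=
  ereal_sup (range (fun x => (vdot xi x - g x)%:E)).

Definition bregman n (psi : 'rV[R]_n -> R) (dpsi : 'rV[R]_n -> 'rV[R]_n)
    (x y : 'rV[R]_n) : R :=
  psi x - psi y - vdot (dpsi y) (x - y).

Definition Phi n (f : 'rV[R]_n -> \bar R) (g hp hm : 'rV[R]_n -> R) x : \bar R :=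
  (f x + (- g x + (hp x - hm x))%:E)%E.

Definition Theta n (f : 'rV[R]_n -> \bar R) (g hp hm : 'rV[R]_n -> R)
    (x xi : 'rV[R]_n) : \bar R :=
  (f x + conjugate g xi - (vdot xi x)%:E + (hp x)%:E - (hm x)%:E)%E.

Definition Thetahat n (f : 'rV[R]_n -> \bar R) (g hp hm : 'rV[R]_n -> R)
    (delta eta : R) (w : quad n) : \bar R :=
  (Theta f g hp hm w.1.1.1 w.1.1.2
   + (delta * vnorm (w.1.1.1 - w.1.2) ^+ 2
      + eta * vnorm (w.1.1.2 - w.2) ^+ 2)%:E)%E.

(* extrapolation, with the convention x^{-1} = x^0 (note 0.-1 = 0) *)
Definition xhat n (x : nat -> 'rV[R]_n) (alpha : nat -> R) (k : nat) : 'rV[R]_n :=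
  x k + alpha k *: (x k - x k.-1).

Definition xi_obj n (g : 'rV[R]_n -> R) (beta : R) (xh xik xi : 'rV[R]_n) : \bar R :=
  (conjugate g xi - (vdot xh xi)%:E + (beta / 2 * vnorm (xi - xik) ^+ 2)%:E)%E.

Definition x_obj n (f : 'rV[R]_n -> \bar R) (hp : 'rV[R]_n -> R)
    (dhm : 'rV[R]_n -> 'rV[R]_n) (psi : 'rV[R]_n -> R)
    (dpsi : 'rV[R]_n -> 'rV[R]_n) (tau : R) (xh xi1 x : 'rV[R]_n) : \bar R :=
  (f x + (hp x - vdot (x - xh) (xi1 + dhm xh)
          + tau * bregman psi dpsi x xh)%:E)%E.

Definition iBPDCA n (f : 'rV[R]_n -> \bar R) (g hp : 'rV[R]_n -> R)
    (dhm : 'rV[R]_n -> 'rV[R]_n) (psi : 'rV[R]_n -> R)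
    (dpsi : 'rV[R]_n -> 'rV[R]_n) (alpha : nat -> R) (beta tau : R)
    (x xi : nat -> 'rV[R]_n) : Prop :=
  forall k,
    (forall z, (xi_obj g beta (xhat x alpha k) (xi k) (xi k.+1)
                <= xi_obj g beta (xhat x alpha k) (xi k) z)%E) /\
    (forall z, (x_obj f hp dhm psi dpsi tau (xhat x alpha k) (xi k.+1) (x k.+1)
                <= x_obj f hp dhm psi dpsi tau (xhat x alpha k) (xi k.+1) z)%E).

Definition omegahat n (x xi : nat -> 'rV[R]_n) (alpha : nat -> R) (k : nat) : quad n :=
  (x k, xi k, xhat x alpha k, xi k.-1).

Definition upsilon n (x xi : nat -> 'rV[R]_n) (alpha : nat -> R)
    (dhm dpsi : 'rV[R]_n -> 'rV[R]_n) (beta tau delta eta : R) (k : nat) : quad n :=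
  let xh := xhat x alpha in
  (dhm (xh k) - dhm (x k.+1) + (2 * delta) *: (x k.+1 - xh k.+1)
     - tau *: (dpsi (x k.+1) - dpsi (xh k)),
   xh k - x k + (alpha k.+1)^-1 *: (x k.+1 - xh k.+1)
     + (2 * eta - beta) *: (xi k.+1 - xi k),
   - ((2 * delta) *: (x k.+1 - xh k.+1)),
   (2 * eta) *: (xi k - xi k.+1)).

End Defs.

(* Main.v *)
Require Import Defs.
From HB Require Import structures.
From mathcomp Require Import all_boot all_order all_algebra.
From mathcomp Require Import all_classical all_reals all_analysis.
From mathcomp Require Import ring lra.
Import Order.TTheory GRing.Theory Num.Theory.
Import numFieldNormedType.Exports.
Local Open Scope ring_scope.
Local Open Scope classical_set_scope.
Set Implicit Arguments.
Unset Strict Implicit.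
Unset Printing Implicit Defensive.
Section Basics.
Variable R : realType.
Variable n : nat.
Implicit Types u v w : 'rV[R]_n.

Lemma vdotC u v : vdot u v = vdot v u.
Proof. by apply: eq_bigr => i _; rewrite mulrC. Qed.

Lemma vdotDl u v w : vdot (u + v) w = vdot u w + vdot v w.
Proof. by rewrite /vdot -big_split; apply: eq_bigr => i _; rewrite !mxE mulrDl. Qed.

Lemma vdotZl (a : R) u w : vdot (a *: u) w = a * vdot u w.
Proof. by rewrite /vdot mulr_sumr; apply: eq_bigr => i _; rewrite !mxE mulrA. Qed.

Lemma vdotNl u w : vdot (- u) w = - vdot u w.
Proof. by rewrite -scaleN1r vdotZl mulN1r. Qed.

Lemma vdotBl u v w : vdot (u - v) w = vdot u w - vdot v w.
Proof. by rewrite vdotDl vdotNl. Qed.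

Lemma vdotDr u v w : vdot w (u + v) = vdot w u + vdot w v.
Proof. by rewrite vdotC vdotDl !(vdotC w). Qed.
Lemma vdotZr (a : R) u w : vdot w (a *: u) = a * vdot w u.
Proof. by rewrite vdotC vdotZl vdotC. Qed.
Lemma vdotNr u w : vdot w (- u) = - vdot w u.
Proof. by rewrite vdotC vdotNl vdotC. Qed.
Lemma vdotBr u v w : vdot w (u - v) = vdot w u - vdot w v.
Proof. by rewrite vdotDr vdotNr. Qed.
Lemma vdot0l w : vdot 0 w = 0.
Proof. by rewrite /vdot big1 // => i _; rewrite mxE mul0r. Qed.
Lemma vdot0r w : vdot w 0 = 0.
Proof. by rewrite vdotC vdot0l. Qed.

Lemma vdot_ge0 u : 0 <= vdot u u.
Proof. by apply: sumr_ge0 => i _; rewrite -expr2 sqr_ge0. Qed.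

Lemma vnorm_ge0 u : 0 <= vnorm u.
Proof. exact: sqrtr_ge0. Qed.

Lemma vnorm_sq u : vnorm u ^+ 2 = vdot u u.
Proof. by rewrite /vnorm sqr_sqrtr // vdot_ge0. Qed.

Lemma vdot_expand u v : vdot (u + v) (u + v) = vdot u u + 2 * vdot u v + vdot v v.
Proof. rewrite vdotDl !vdotDr (vdotC v u); ring. Qed.

Lemma vdot_expandB u v : vdot (u - v) (u - v) = vdot u u - 2 * vdot u v + vdot v v.
Proof. rewrite vdot_expand vdotNr vdotNl vdotNr opprK; ring. Qed.

Lemma CS_sq u v : vdot u v ^+ 2 <= vdot u u * vdot v v.
Proof.
set a := vdot u u; set b := vdot v v; set c := vdot u v.
have H t : 0 <= a - 2 * t * c + t ^+ 2 * b.
  have := vdot_ge0 (u - t *: v).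
  by rewrite vdot_expandB vdotZr vdotZl vdotZr -/a -/b -/c; congr (_ <= _); ring.
have a0 : 0 <= a := vdot_ge0 u.
have b0 : 0 <= b := vdot_ge0 v.
have [b00|bpos] := eqVneq b 0.
  have [c00|cn0] := eqVneq c 0; first by rewrite c00 b00; lra.
  have := H ((a + 1) / (2 * c)); rewrite b00 mulr0 addr0.
  have -> : 2 * ((a + 1) / (2 * c)) * c = a + 1 by field; rewrite ?cn0 ?pnatr_eq0 ?mulf_neq0.
  lra.
have bp : 0 < b by rewrite lt_neqAle eq_sym bpos b0.
have := H (c / b).
have -> : a - 2 * (c / b) * c + (c / b) ^+ 2 * b = (a * b - c ^+ 2) / b by field; rewrite gt_eqF.
rewrite pmulr_lge0 ?invr_gt0 //; lra.
Qed.

Lemma CS u v : `|vdot u v| <= vnorm u * vnorm v.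
Proof.
have := CS_sq u v; rewrite -!vnorm_sq.
have := vnorm_ge0 u; have := vnorm_ge0 v.
set A := vnorm u; set B := vnorm v; set c := vdot u v => B0 A0 h.
have AB0 : 0 <= A * B by apply: mulr_ge0.
rewrite -(ger0_norm AB0); rewrite -ler_sqr ?nnegrE ?normr_ge0 // !real_normK ?num_real //.
by rewrite exprMn.
Qed.

Lemma vnormD u v : vnorm (u + v) <= vnorm u + vnorm v.
Proof.
rewrite -ler_sqr ?nnegrE ?vnorm_ge0 ?addr_ge0 ?vnorm_ge0 //.
rewrite vnorm_sq vdot_expand sqrrD !vnorm_sq.
have := CS u v; have := ler_norm (vdot u v); lra.
Qed.

Lemma vnormZ (a : R) u : vnorm (a *: u) = `|a| * vnorm u.
Proof.
rewrite /vnorm vdotZl vdotZr mulrA -expr2 sqrtrM ?sqr_ge0 //.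
by rewrite sqrtr_sqr.
Qed.

Lemma vnormN u : vnorm (- u) = vnorm u.
Proof. by rewrite -scaleN1r vnormZ normrN normr1 mul1r. Qed.

Lemma vnormB u v : vnorm (u - v) <= vnorm u + vnorm v.
Proof. by have := vnormD u (- v); rewrite vnormN. Qed.

Lemma vnorm_sym u v : vnorm (u - v) = vnorm (v - u).
Proof. by rewrite -vnormN opprB. Qed.

Lemma vnorm0 : vnorm (0 : 'rV[R]_n) = 0.
Proof. by rewrite /vnorm vdot0l sqrtr0. Qed.

End Basics.

Section SubMin.
Variable R : realType.
Variable n : nat.
Lemma small_t {D m : R} : (0 <= D)%R -> (0 < m)%R ->
  exists t : R, [/\ (0 < t)%R, (t < 1)%R & (t * D < m)%R].
Proof.
move=> D0 m0.
exists (Num.min (1/2) (m / (2 * (D + 1)))); split.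
- by rewrite lt_min; apply/andP; split; [lra | apply: divr_gt0; lra].
- by rewrite gt_min; apply/orP; left; lra.
- apply: (@le_lt_trans _ _ ((m / (2 * (D + 1))) * D)).
    by apply: ler_wpM2r => //; rewrite ge_min lexx orbT.
  have -> : (m / (2 * (D + 1)) * D = m * (D / (2 * (D + 1))))%R by field; lra.
  rewrite -[ltRHS]mulr1 ltr_pM2l // ltr_pdivrMr; lra.
Qed.

Local Open Scope ereal_scope.
Lemma sub_of_min (F : 'rV[R]_n -> \bar R) (s : 'rV[R]_n -> R) (G x1 : 'rV[R]_n) (d0 : R) :
  econvex_fun F -> F x1 \is a fin_num ->
  (forall e : R, (0 < e)%R -> exists2 d : R, (0 < d)%R & forall y, (vnorm (y - x1) < d)%R ->
      (s y - s x1 - vdot G (y - x1) <= e * vnorm (y - x1))%R) ->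
  (0 < d0)%R ->
  (forall z, (vnorm (z - x1) < d0)%R -> F x1 + (s x1)%:E <= F z + (s z)%:E) ->
  forall y, F x1 + (- vdot G (y - x1))%:E <= F y.
Proof.
move=> Fc Ffin sgrad d0p Fmin y.
rewrite -(fineK Ffin); set fx := fine (F x1).
rewrite -(fineK Ffin) -/fx in Fmin.
set D := vnorm (y - x1).
have D0 : (0 <= D)%R by apply: vnorm_ge0.
have seg t : (0 < t)%R -> (t < 1)%R -> (t *: y + (1 - t) *: x1 - x1 = t *: (y - x1))%R.
  by move=> _ _; rewrite scalerBr scalerBl scale1r; rewrite addrCA addrAC subrr add0r.
have nseg t : (0 < t)%R -> (t < 1)%R -> vnorm (t *: y + (1 - t) *: x1 - x1) = (t * D)%R.
  by move=> t0 t1; rewrite seg // vnormZ ger0_norm // ltW.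
case Fy: (F y) => [fy| |]; last 2 first.
- by rewrite leey.
- exfalso.
  have [t [t0 t1 tD]] := small_t D0 d0p.
  have := Fc y x1 t; rewrite t0 t1 => /(_ isT).
  rewrite Fy -(fineK Ffin) -/fx mulrNy gtr0_sg // mul1e addNye leeNy_eq => /eqP Fz.
  have := Fmin (t *: y + (1 - t) *: x1)%R; rewrite nseg // => /(_ tD).
  by rewrite Fz addNye leeNy_eq.
rewrite -EFinD lee_fin.
apply/ler_addgt0Pr => e e0.
have eD0 : (0 < e / (D + 1))%R by apply: divr_gt0 => //; lra.
have [d dpos Hd] := sgrad _ eD0.
have md : (0 < Num.min d d0)%R by rewrite lt_min dpos d0p.
have [t [t0 t1 tD]] := small_t D0 md.
move: tD; rewrite lt_min => /andP[tDd tDd0].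
set z := (t *: y + (1 - t) *: x1)%R.
have Hz := Hd z; rewrite /z nseg // seg // in Hz; have {}Hz := Hz tDd.
rewrite vdotZr -/z in Hz.
have Fcz := Fc y x1 t; rewrite t0 t1 -/z in Fcz; have {}Fcz := Fcz isT.
rewrite Fy -(fineK Ffin) -/fx -!EFinM -EFinD in Fcz.
have Fmz := Fmin z; rewrite /z nseg // -/z in Fmz; have {}Fmz := Fmz tDd0.
case Fz: (F z) Fcz Fmz => [fz| |]; last 2 first.
- by rewrite leye_eq.
- by rewrite addNye leeNy_eq.
rewrite -!EFinD !lee_fin => Fcz Fmz.
have key : (t * fx <= t * fy + t * (vdot G (y - x1) + e / (D + 1) * D))%R.
  have : (e / (D + 1) * (t * D) = t * (e / (D + 1) * D))%R by ring.
  lra.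
have key2 : (fx <= fy + (vdot G (y - x1) + e / (D + 1) * D))%R.
  by rewrite -(ler_pM2l t0) mulrDr.
have : (e / (D + 1) * D <= e)%R.
  rewrite mulrAC ler_pdivrMr; last lra.
  by rewrite ler_pM2l //; lra.
lra.
Qed.

End SubMin.

Section GSub.
Variable R : realType.
Variable n : nat.
Implicit Types u v w : 'rV[R]_n.

Lemma quad_grad (s : 'rV[R]_n -> R) (G x1 : 'rV[R]_n) (c : R) :
  (forall y, s y - s x1 - vdot G (y - x1) = c * vnorm (y - x1) ^+ 2) ->
  forall e : R, 0 < e -> exists2 d : R, 0 < d & forall y, vnorm (y - x1) < d ->
      s y - s x1 - vdot G (y - x1) <= e * vnorm (y - x1).
Proof.
move=> H e e0; exists (e / (`|c| + 1)); first by apply: divr_gt0 => //; have := normr_ge0 c; lra.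
move=> y hy; rewrite H.
have D0 := vnorm_ge0 (y - x1); set D := vnorm (y - x1) in hy D0 *.
have c0 := normr_ge0 c.
have : c * D ^+ 2 <= `|c| * D * D by rewrite -mulrA -expr2; apply: ler_wpM2r; [rewrite sqr_ge0|rewrite ler_norm].
have : `|c| * D <= e.
  move: hy; rewrite ltr_pdivlMr; last lra.
  move=> hy; have : `|c| * D <= D * (`|c| + 1) by nra.
  lra.
move=> h1 h2; apply: (le_trans h2); rewrite ler_wpM2r //.
Qed.

Lemma econvex_EFin (g : 'rV[R]_n -> R) : convex_fun g -> econvex_fun (fun x => (g x)%:E).
Proof. by move=> gc x y l hl; rewrite -!EFinM -EFinD lee_fin; apply: gc. Qed.

Lemma mx_normE' (v : 'rV[R]_n) : `|v| = \big[Num.max/0]_ij `|v ij.1 ij.2|.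
Proof. by rewrite -mx_normrE. Qed.

Lemma mx_le_vnorm (v : 'rV[R]_n) : `|v| <= vnorm v.
Proof.
rewrite mx_normE'; apply: bigmax_le; first exact: vnorm_ge0.
move=> [i j] _ /=; rewrite (ord1 i).
rewrite -(sqrtr_sqr (v ord0 j)) ler_sqrt ?vdot_ge0 //.
rewrite /vdot (bigD1 j) //= -expr2 lerDl; by apply: sumr_ge0 => k _; rewrite -expr2 sqr_ge0.
Qed.

Lemma vnorm_le_mx (v : 'rV[R]_n) : vnorm v <= (n%:R + 1) * `|v|.
Proof.
have v0 : 0 <= `|v| := normr_ge0 v.
rewrite /vnorm -(ger0_norm (x := (n%:R + 1) * `|v|)); last by apply: mulr_ge0 => //; lra.
rewrite -sqrtr_sqr ler_sqrt; last by rewrite sqr_ge0.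
apply: (@le_trans _ _ (\sum_(i < n) `|v| ^+ 2)).
  apply: ler_sum => i _; rewrite -expr2 -real_normK ?num_real // lerXn2r ?nnegrE ?normr_ge0 //.
  rewrite mx_normE'.
  exact: (le_bigmax 0 (fun ij : 'I_1 * 'I_n => `|v ij.1 ij.2|) (ord0, i)).
have h : n%:R <= (n%:R + 1) ^+ 2 :> R by have : (0 <= n%:R :> R) by []; nra.
rewrite sumr_const card_ord exprMn -[in leLHS]mulr_natl; apply: ler_wpM2r => //; exact: sqr_ge0.
Qed.

Lemma contfun_cont (F : 'rV[R]_n -> R) : continuous_fun F -> continuous F.
Proof.
move=> Fc x A.
move=> /nbhs_ballP [e e0 heA].
have [d d0 Hd] := Fc x e e0.
have hn : (0:R) < n%:R + 1 by have : (0:R) <= n%:R := ler0n _ _; lra.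
apply: (@nbhs_ballP _ _ x (F @^-1` A)).2.
exists (d / (n%:R + 1)); first by apply: divr_gt0.
move=> y; rewrite -ball_normE /= => hy.
apply: heA; rewrite -ball_normE /=.
rewrite distrC; apply: Hd.
apply: (le_lt_trans (vnorm_le_mx _)).
have E : `|(y : 'rV[R]_n) - x| = `|(x : 'rV[R]_n) - y| by rewrite -normrN opprB.
rewrite E -ltr_pdivlMl //.
by rewrite mulrC.
Qed.

Lemma vdot_cont : continuous_fun (fun x : 'rV[R]_n => vdot x x / 2).
Proof.
move=> x e e0.
have X0 := vnorm_ge0 x.
exists (Num.min 1 (e / (1 + 2 * vnorm x))).
  by rewrite lt_min ltr01 /=; apply: divr_gt0 => //; lra.
move=> y; rewrite lt_min => /andP[h1 h2].
have -> : vdot y y / 2 - vdot x x / 2 = (vdot (y - x) (y - x) + 2 * vdot x (y - x)) / 2.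
  by rewrite vdot_expandB !vdotBr (vdotC x y); field.
have D0 := vnorm_ge0 (y - x); set D := vnorm (y - x) in h1 h2 D0.
have cs := CS x (y - x); rewrite -/D in cs.
have q := vnorm_sq (y - x); rewrite -/D in q.
rewrite normrM [`|2^-1|]ger0_norm ?invr_ge0 //.
move: cs; rewrite ler_norml => /andP[c1 c2].
move: h2; rewrite ltr_pdivlMr; last lra.
move=> h2.
have h4 : D ^+ 2 <= D by rewrite expr2; nra.
rewrite -q ltr_pdivrMr // ltr_norml; apply/andP; split; nra.
Qed.

Lemma g_sub (g : 'rV[R]_n -> R) : convex_fun g -> continuous_fun g ->
  exists (z : 'rV[R]_n) (C : R), forall y, vdot z y - g y <= C.
Proof.
move=> gc gcont.
have [d d0 Hd] := gcont 0 1 ltr01.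
have lin y : g 0 - 1 - vnorm y * (2 / d) <= g y.
  have Y0 := vnorm_ge0 y.
  have [yd|yd] := ltP (vnorm y) d.
    have := Hd y; rewrite subr0 => /(_ yd); rewrite ltr_norml => /andP[h _].
    have : 0 <= vnorm y * (2 / d) by apply: mulr_ge0 => //; apply: divr_ge0 => //; lra.
    lra.
  have Yp : 0 < vnorm y by lra.
  set l := d / 2 / vnorm y.
  have l0 : 0 < l by apply: divr_gt0 => //; lra.
  have l1 : l < 1 by rewrite /l ltr_pdivrMr // mul1r; lra.
  have := gc y 0 l; rewrite l0 l1 scaler0 addr0 => /(_ isT) hc.
  have hu : vnorm (l *: y) = d / 2.
    by rewrite vnormZ (ger0_norm (ltW l0)) /l; field; lra.
  have := Hd (l *: y); rewrite subr0 hu.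
  move=> /(_ ltac:(lra)); rewrite ltr_norml => /andP[h _].
  have key : l * (g 0 - 1 - vnorm y * (2 / d)) <= l * g y.
    have -> : l * (g 0 - 1 - vnorm y * (2 / d)) = l * g 0 - l - 1.
      by rewrite /l; field; apply/andP; split; lra.
    have : 0 <= l by lra.
    nra.
  by rewrite -(ler_pM2l l0).
pose phi (y : 'rV[R]_n) := g y + vdot y y / 2.
have [r rdef] : exists r : R, r = 2 * (2 / d) + 2 by eexists.
have dd : 0 < 2 / d by apply: divr_gt0 => //; lra.
have r0 : 0 < r by lra.
have far y : r <= vnorm y -> g 0 < phi y.
  move=> hy; rewrite /phi -vnorm_sq.
  have := lin y; set v := vnorm y in hy *.
  have : v * (2 / d) + 1 < v ^+ 2 / 2.
    rewrite expr2; nra.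
  lra.
pose A := closed_ball (0 : 'rV[R]_n) r.
have Aeq y : A y <-> `|y| <= r.
  by rewrite /A closed_ballE // /closed_ball_ /= sub0r normrN.
have A0 : A 0 by apply/Aeq; rewrite normr0; lra.
have cA : compact A.
  apply: bounded_closed_compact; last exact: closed_ball_closed.
  exists r; split; first by rewrite num_real.
  by move=> M rM y /Aeq Ay; apply: (le_trans Ay); apply: ltW.
have phic : continuous phi.
  move=> y; apply: contfun_cont => z e e0.
  have [d1 d10 H1] := gcont z (e / 2) ltac:(lra).
  have [d2 d20 H2] := (vdot_cont : continuous_fun _) z (e / 2) ltac:(lra).
  exists (Num.min d1 d2); first by rewrite lt_min d10 d20.
  move=> w; rewrite lt_min => /andP[w1 w2].
  have := H1 w w1; have := H2 w w2; rewrite /phi.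
  have -> : g w + vdot w w / 2 - (g z + vdot z z / 2) = (g w - g z) + (vdot w w / 2 - vdot z z / 2) by ring.
  move=> a b; apply: (le_lt_trans (ler_normD _ _)); lra.
have [c cA' cmin] := EVT_min_rV (ex_intro _ 0 A0) cA (@continuous_subspaceT _ _ A phi phic).
rewrite inE in cA'.
have phic0 : phi c <= g 0.
  have := cmin 0; rewrite inE => /(_ A0); rewrite /phi vdot0l mul0r addr0.
  by [].
have cr : vnorm c < r.
  by rewrite ltNge; apply/negP => /far; lra.
have cr' : `|c| < r by apply: le_lt_trans (mx_le_vnorm c) cr.
have := @sub_of_min R n (fun y => (g y)%:E) (fun y => vdot y y / 2) c c (r - `|c|)
  (econvex_EFin gc) ltac:(by []).
move=> /(_ _ _ _ ) H.
have : forall y, ((g c)%:E + (- vdot c (y - c))%:E <= (g y)%:E)%E.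
  apply: H.
  - apply: quad_grad (1/2) _ => y.
    by rewrite vnorm_sq vdot_expandB !vdotBr (vdotC c y); field.
  - lra.
  - move=> z hz; rewrite -!EFinD lee_fin.
    have Az : A z.
      apply/Aeq; have := mx_le_vnorm (z - c).
      have := ler_normD (z - c) c; rewrite subrK.
      lra.
    have := cmin z (mem_set Az); rewrite /phi; lra.
move=> Hs; exists (- c), (- vdot c c - g c) => y.
have := Hs y; rewrite -EFinD lee_fin vdotNl vdotBr; lra.
Qed.

End GSub.

Section Conj.
Variable R : realType.
Variable n : nat.
Implicit Types u v w : 'rV[R]_n.
Local Open Scope ereal_scope.

Lemma conj_lb (g : 'rV[R]_n -> R) xi z : (vdot xi z - g z)%:E <= conjugate g xi.
Proof. by apply: ereal_sup_ubound; exists z. Qed.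

Lemma conj_ub (g : 'rV[R]_n -> R) xi (C : R) :
  (forall z, (vdot xi z - g z <= C)%R) -> conjugate g xi <= C%:E.
Proof. by move=> H; apply: ge_ereal_sup => _ [z _ <-]; rewrite lee_fin. Qed.

Lemma conj_neqNy (g : 'rV[R]_n -> R) xi : conjugate g xi != -oo.
Proof.
apply/negP => /eqP h; have := conj_lb g xi 0; rewrite h.
by rewrite leeNy_eq.
Qed.

Lemma conj_convex (g : 'rV[R]_n -> R) : econvex_fun (conjugate g).
Proof.
move=> x y l /andP[l0 l1].
apply: ge_ereal_sup => _ [z _ <-].
have -> : (vdot (l *: x + (1 - l) *: y) z - g z)%R =
          (l * (vdot x z - g z) + (1 - l) * (vdot y z - g z))%R.
  by rewrite vdotDl !vdotZl; ring.
rewrite EFinD !EFinM; apply: leeD; apply: lee_wpmul2l.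
- by rewrite lee_fin ltW.
- exact: conj_lb.
- by rewrite lee_fin subr_ge0 ltW.
- exact: conj_lb.
Qed.

Lemma Thetahat_eq (f : 'rV[R]_n -> \bar R) (g hp hm : 'rV[R]_n -> R) (delta eta : R)
  (w : quad R n) :
  Thetahat f g hp hm delta eta w =
  f w.1.1.1 + conjugate g w.1.1.2 +
  (- vdot w.1.1.2 w.1.1.1 + hp w.1.1.1 - hm w.1.1.1 +
   (delta * vnorm (w.1.1.1 - w.1.2) ^+ 2 + eta * vnorm (w.1.1.2 - w.2) ^+ 2))%:E.
Proof.
rewrite /Thetahat /Theta !EFinD EFinN.
by rewrite -!addeA; congr (_ + _); congr (_ + _); rewrite -EFinN; rewrite !addeA.
Qed.

End Conj.

Section Alg.
Variable R : realType.
Variable n : nat.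
Implicit Types u v w : 'rV[R]_n.

Lemma vnormD_sq u v : vnorm (u + v) ^+ 2 = vnorm u ^+ 2 + 2 * vdot u v + vnorm v ^+ 2.
Proof. by rewrite !vnorm_sq vdot_expand. Qed.

Lemma Sdiff (x1 xi1 xh1 z1 dx dxi dxh dz : 'rV[R]_n) (delta eta : R) :
  (- vdot (xi1 + dxi) (x1 + dx) + (delta * vnorm (x1 + dx - (xh1 + dxh)) ^+ 2
     + eta * vnorm (xi1 + dxi - (z1 + dz)) ^+ 2))
  - (- vdot xi1 x1 + (delta * vnorm (x1 - xh1) ^+ 2 + eta * vnorm (xi1 - z1) ^+ 2))
  = - vdot xi1 dx - vdot x1 dxi - vdot dxi dx
    + delta * (2 * vdot (x1 - xh1) dx - 2 * vdot (x1 - xh1) dxh + vnorm (dx - dxh) ^+ 2)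
    + eta * (2 * vdot (xi1 - z1) dxi - 2 * vdot (xi1 - z1) dz + vnorm (dxi - dz) ^+ 2).
Proof.
have e1 : x1 + dx - (xh1 + dxh) = (x1 - xh1) + (dx - dxh).
  by rewrite opprD addrACA.
have e2 : xi1 + dxi - (z1 + dz) = (xi1 - z1) + (dxi - dz).
  by rewrite opprD addrACA.
rewrite e1 e2 !vnormD_sq !vdotBr vdotDl !vdotDr (vdotC dxi x1).
ring.
Qed.

Lemma quad_id u v w : vnorm (u - v) ^+ 2 = vnorm (w - v) ^+ 2 + 2 * vdot (w - v) (u - w) + vnorm (u - w) ^+ 2.
Proof.
have -> : u - v = (w - v) + (u - w) by rewrite [RHS]addrC [RHS]addrA subrK.
by rewrite vnormD_sq.
Qed.

Lemma sqrt_sum4 (a b c d : R) : 0 <= a -> 0 <= b -> 0 <= c -> 0 <= d ->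
  Num.sqrt (a ^+ 2 + b ^+ 2 + c ^+ 2 + d ^+ 2) <= a + b + c + d.
Proof.
move=> a0 b0 c0 d0.
rewrite -(ger0_norm (x := a + b + c + d)); last by lra.
rewrite -sqrtr_sqr ler_sqrt; last by rewrite sqr_ge0.
rewrite !expr2; nra.
Qed.

Lemma vnorm_le_sqrt u (s : R) : 0 <= s -> vnorm u <= Num.sqrt (vdot u u + s).
Proof. by move=> s0; rewrite ler_sqrt ?lerDl // addr_ge0 // vdot_ge0. Qed.

End Alg.

Section Steps.
Variable R : realType.
Variable n : nat.
Implicit Types u v w : 'rV[R]_n.
Ltac vexp := rewrite ?(vdotBl, vdotDl, vdotNl, vdotZl, vdotBr, vdotDr, vdotNr, vdotZr).

Lemma fin_numP' (a : \bar R) : a != -oo%E -> a != +oo%E -> a \is a fin_num.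
Proof. by move=> h1 h2; rewrite fin_numE h1 h2. Qed.

Lemma xstep (f : 'rV[R]_n -> \bar R) (hp hm psi : 'rV[R]_n -> R) (dhp dhm dpsi : 'rV[R]_n -> 'rV[R]_n)
  (tau : R) (xh xi1 x1 : 'rV[R]_n) :
  proper_fun f -> econvex_fun f -> has_gradient hp dhp -> has_gradient psi dpsi ->
  (forall z, (x_obj f hp dhm psi dpsi tau xh xi1 x1 <= x_obj f hp dhm psi dpsi tau xh xi1 z)%E) ->
  f x1 \is a fin_num /\
  forall y, (f x1 + (vdot (xi1 + dhm xh - dhp x1 - tau *: (dpsi x1 - dpsi xh)) (y - x1))%:E <= f y)%E.
Proof.
move=> [fNy [z0 fz0]] fc hpg psig xmin.
have ffin : f x1 \is a fin_num.
  apply: fin_numP' => //; apply/negP => /eqP h.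
  have := xmin z0; rewrite /x_obj h.
  have : f z0 \is a fin_num by apply: fin_numP'.
  by move/fineK <-; rewrite -EFinD /=.
split => //.
pose s z := hp z - vdot (z - xh) (xi1 + dhm xh) + tau * bregman psi dpsi z xh.
pose G := dhp x1 - (xi1 + dhm xh) + tau *: (dpsi x1 - dpsi xh).
have H := @sub_of_min R n f s G x1 1 fc ffin.
move=> y.
have -> : vdot (xi1 + dhm xh - dhp x1 - tau *: (dpsi x1 - dpsi xh)) (y - x1) = - vdot G (y - x1).
  rewrite /G; vexp; ring.
apply: H => //.
move=> e e0.
have e2 : (0 < e / 2)%R by lra.
have t0 : (0 < `|tau| + 1)%R by have := normr_ge0 tau; lra.
have e3 : (0 < e / (2 * (`|tau| + 1)))%R by apply: divr_gt0 => //; lra.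
have [d1 d10 H1] := hpg x1 _ e2.
have [d2 d20 H2] := psig x1 _ e3.
exists (Num.min d1 d2); first by rewrite lt_min d10 d20.
move=> z; rewrite lt_min => /andP[z1 z2].
have := H1 z z1; have := H2 z z2.
have -> : (s z - s x1 - vdot G (z - x1) =
   (hp z - hp x1 - vdot (dhp x1) (z - x1)) + tau * (psi z - psi x1 - vdot (dpsi x1) (z - x1)))%R.
  rewrite /s /G /bregman (vdotC (z - xh)) (vdotC (x1 - xh)).
  vexp; ring.
set A := (hp z - hp x1 - _)%R; set B := (psi z - psi x1 - _)%R.
set D := vnorm (z - x1).
have D0 : (0 <= D)%R by apply: vnorm_ge0.
move=> hB hA.
have hA' : (A <= e / 2 * D)%R by apply: le_trans (ler_norm _) hA.
have hB' : (tau * B <= `|tau| * (e / (2 * (`|tau| + 1)) * D))%R.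
  apply: le_trans (ler_norm _) _; rewrite normrM; apply: ler_wpM2l => //.
have hC : (`|tau| * (e / (2 * (`|tau| + 1)) * D) <= e / 2 * D)%R.
  rewrite mulrA; apply: ler_wpM2r => //.
  rewrite mulrA ler_pdivrMr; last lra.
  have := normr_ge0 tau; nra.
lra.
by move=> z _; apply: xmin.
Qed.

Lemma xi_obj_eq (g : 'rV[R]_n -> R) beta xh xik z :
  xi_obj g beta xh xik z = (conjugate g z + (- vdot xh z + beta / 2 * vnorm (z - xik) ^+ 2)%:E)%E.
Proof. by rewrite /xi_obj EFinD EFinN addeA. Qed.

Lemma xistep (g : 'rV[R]_n -> R) (beta : R) (xh xik xi1 : 'rV[R]_n) :
  convex_fun g -> continuous_fun g ->
  (forall z, (xi_obj g beta xh xik xi1 <= xi_obj g beta xh xik z)%E) ->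
  conjugate g xi1 \is a fin_num /\
  forall y, (conjugate g xi1 + (vdot (xh - beta *: (xi1 - xik)) (y - xi1))%:E <= conjugate g y)%E.
Proof.
move=> gc gcont ximin.
have cfin : conjugate g xi1 \is a fin_num.
  apply: fin_numP'; first exact: conj_neqNy.
  apply/negP => /eqP h.
  have [z0 [C HC]] := g_sub gc gcont.
  have := ximin z0; rewrite !xi_obj_eq h.
  have cz0 : conjugate g z0 \is a fin_num.
    apply: fin_numP'; first exact: conj_neqNy.
    apply/negP => /eqP h'; have := conj_ub HC; rewrite h' leye_eq.
    by [].
  by move: cz0 => /fineK <-; rewrite -EFinD /=.
split => //.
pose s z := (- vdot xh z + beta / 2 * vnorm (z - xik) ^+ 2)%R.
pose G := (- xh + beta *: (xi1 - xik)).
have H := @sub_of_min R n (conjugate g) s G xi1 1 (@conj_convex R n g) cfin.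
move=> y.
have -> : vdot (xh - beta *: (xi1 - xik)) (y - xi1) = (- vdot G (y - xi1))%R.
  by rewrite /G; vexp; ring.
apply: H => //.
- apply: (quad_grad (c := beta / 2)) => z.
  have E : (- vdot xh z + beta / 2 * vnorm (z - xik) ^+ 2) - (- vdot xh xi1 + beta / 2 * vnorm (xi1 - xik) ^+ 2)
     - vdot (- xh + beta *: (xi1 - xik)) (z - xi1) = beta / 2 * vnorm (z - xi1) ^+ 2 :> R.
    by rewrite (quad_id z xik xi1) (vdotDl (- xh)) (vdotNl xh) (vdotZl beta) (vdotBr z xi1 xh); field.
  exact: E.
- by move=> z _; rewrite -!xi_obj_eq; apply: ximin.
Qed.

End Steps.

Section Frechet.
Variable R : realType.
Variable n : nat.
Implicit Types u v w : 'rV[R]_n.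
Ltac vexpl := rewrite ?(vdotBl, vdotDl, vdotNl, vdotZl).

Lemma frechet_main (f : 'rV[R]_n -> \bar R) (g hp hm : 'rV[R]_n -> R)
  (dhp dhm : 'rV[R]_n -> 'rV[R]_n) (delta eta : R)
  (x1 xi1 xh1 z1 a b : 'rV[R]_n) (ups : quad R n) :
  has_gradient hp dhp -> has_gradient hm dhm ->
  f x1 \is a fin_num -> (forall y, (f x1 + (vdot a (y - x1))%:E <= f y)%E) ->
  conjugate g xi1 \is a fin_num ->
  (forall y, (conjugate g xi1 + (vdot b (y - xi1))%:E <= conjugate g y)%E) ->
  (forall dx dxi dxh dz, ip4 ups (dx, dxi, dxh, dz) =
     vdot a dx + vdot b dxi
     + vdot (- xi1 + dhp x1 - dhm x1 + (2 * delta) *: (x1 - xh1)) dx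
     + vdot (- x1 + (2 * eta) *: (xi1 - z1)) dxi
     + vdot (- ((2 * delta) *: (x1 - xh1))) dxh
     + vdot ((2 * eta) *: (z1 - xi1)) dz) ->
  frechet_subdiff (@ip4 R n) (Thetahat f g hp hm delta eta) (x1, xi1, xh1, z1) ups.
Proof.
move=> hpg hmg ffin fsub cfin csub Hups.
split.
  by rewrite Thetahat_eq /= !fin_numD ffin cfin.
move=> e e0.
set K := 1 + 4 * `|delta| + 4 * `|eta|.
have K0 : 0 < K by have := normr_ge0 delta; have := normr_ge0 eta; rewrite /K; lra.
have e1 : 0 < e / 4 by lra.
have [dp dp0 Hp] := hpg x1 _ e1.
have [dm dm0 Hm] := hmg x1 _ e1.
have eK : 0 < e / (2 * K) by apply: divr_gt0 => //; lra.
exists (Num.min (Num.min dp dm) (e / (2 * K))).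
  by rewrite !lt_min dp0 dm0 eK.
move=> [[[x' xi'] xh'] z'].
set dx := x' - x1; set dxi := xi' - xi1; set dxh := xh' - xh1; set dz := z' - z1.
have ex : x' = x1 + dx by rewrite /dx addrCA subrr addr0.
have exi : xi' = xi1 + dxi by rewrite /dxi addrCA subrr addr0.
have exh : xh' = xh1 + dxh by rewrite /dxh addrCA subrr addr0.
have ez : z' = z1 + dz by rewrite /dz addrCA subrr addr0.
have NE : ipnorm (@ip4 R n) ((x', xi', xh', z') - (x1, xi1, xh1, z1)) =
  Num.sqrt (vdot dx dx + vdot dxi dxi + vdot dxh dxh + vdot dz dz) by [].
have ipE : ip4 ups ((x', xi', xh', z') - (x1, xi1, xh1, z1)) = ip4 ups (dx, dxi, dxh, dz) by [].
rewrite NE ipE !lt_min => /andP[/andP[Ndp Ndm] NeK].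
set N := Num.sqrt _ in Ndp Ndm NeK *.
have N0 : 0 <= N by apply: sqrtr_ge0.
have q1 := vdot_ge0 dx; have q2 := vdot_ge0 dxi; have q3 := vdot_ge0 dxh; have q4 := vdot_ge0 dz.
have nx : vnorm dx <= N by rewrite /N -!addrA; apply: vnorm_le_sqrt; lra.
have nxi : vnorm dxi <= N.
  rewrite /N (addrC (vdot dx dx)) -!addrA; apply: vnorm_le_sqrt; lra.
have nxh : vnorm dxh <= N.
  rewrite /N; have -> : vdot dx dx + vdot dxi dxi + vdot dxh dxh + vdot dz dz = vdot dxh dxh + (vdot dx dx + vdot dxi dxi + vdot dz dz) by ring.
  by apply: vnorm_le_sqrt; lra.
have nz : vnorm dz <= N.
  rewrite /N; have -> : vdot dx dx + vdot dxi dxi + vdot dxh dxh + vdot dz dz = vdot dz dz + (vdot dx dx + vdot dxi dxi + vdot dxh dxh) by ring.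
  by apply: vnorm_le_sqrt; lra.
have nx0 := vnorm_ge0 dx; have nxi0 := vnorm_ge0 dxi.
have nxh0 := vnorm_ge0 dxh; have nz0 := vnorm_ge0 dz.
have Rp := Hp x' ltac:(rewrite -/dx; lra); rewrite -/dx in Rp.
have Rm := Hm x' ltac:(rewrite -/dx; lra); rewrite -/dx in Rm.
move: Rp Rm; rewrite !ler_norml => /andP[Rp1 Rp2] /andP[Rm1 Rm2].
have cs := CS dxi dx; rewrite ler_norml in cs; move: cs => /andP[cs1 cs2].
have pr : vnorm dxi * vnorm dx <= N * N by apply: ler_pM.
have nd1 : vnorm (dx - dxh) <= 2 * N by have := vnormB dx dxh; lra.
have nd2 : vnorm (dxi - dz) <= 2 * N by have := vnormB dxi dz; lra.
have nd1' : vnorm (dx - dxh) ^+ 2 <= 4 * (N * N).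
  have := vnorm_ge0 (dx - dxh); rewrite expr2; nra.
have nd2' : vnorm (dxi - dz) ^+ 2 <= 4 * (N * N).
  have := vnorm_ge0 (dxi - dz); rewrite expr2; nra.
have sq1 : - `|delta| * vnorm (dx - dxh) ^+ 2 <= delta * vnorm (dx - dxh) ^+ 2.
  apply: ler_wpM2r; first exact: sqr_ge0.
  by rewrite lerNl -normrN ler_norm.
have sq2 : - `|eta| * vnorm (dxi - dz) ^+ 2 <= eta * vnorm (dxi - dz) ^+ 2.
  apply: ler_wpM2r; first exact: sqr_ge0.
  by rewrite lerNl -normrN ler_norm.
have sq1' : `|delta| * vnorm (dx - dxh) ^+ 2 <= `|delta| * (4 * (N * N)) by apply: ler_wpM2l.
have sq2' : `|eta| * vnorm (dxi - dz) ^+ 2 <= `|eta| * (4 * (N * N)) by apply: ler_wpM2l.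
have KN : K * (N * N) <= e / 2 * N.
  rewrite mulrA; apply: ler_wpM2r => //.
  move: NeK; rewrite ltr_pdivlMr; last lra.
  lra.
have eN1 : e / 4 * vnorm dx <= e / 4 * N by apply: ler_wpM2l => //; lra.
set Rem := - vdot dxi dx + (hp x' - hp x1 - vdot (dhp x1) dx) - (hm x' - hm x1 - vdot (dhm x1) dx)
   + delta * vnorm (dx - dxh) ^+ 2 + eta * vnorm (dxi - dz) ^+ 2.
have Rem_bd : - (e * N) <= Rem.
  rewrite /Rem /K in KN *.
  lra.
set S := fun X Xi Xh Z : 'rV[R]_n => - vdot Xi X + hp X - hm X +
   (delta * vnorm (X - Xh) ^+ 2 + eta * vnorm (Xi - Z) ^+ 2).
have Iden : S x' xi' xh' z' - S x1 xi1 xh1 z1 - (ip4 ups (dx, dxi, dxh, dz) - vdot a dx - vdot b dxi) = Rem.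
  rewrite Hups /S /Rem.
  have Sd := Sdiff x1 xi1 xh1 z1 dx dxi dxh dz delta eta.
  rewrite -ex -exi -exh -ez in Sd.
  have -> : - vdot xi' x' + hp x' - hm x' + (delta * vnorm (x' - xh') ^+ 2 + eta * vnorm (xi' - z') ^+ 2)
            - (- vdot xi1 x1 + hp x1 - hm x1 + (delta * vnorm (x1 - xh1) ^+ 2 + eta * vnorm (xi1 - z1) ^+ 2))
        = ((- vdot xi' x' + (delta * vnorm (x' - xh') ^+ 2 + eta * vnorm (xi' - z') ^+ 2))
            - (- vdot xi1 x1 + (delta * vnorm (x1 - xh1) ^+ 2 + eta * vnorm (xi1 - z1) ^+ 2)))
          + (hp x' - hp x1) - (hm x' - hm x1) by ring.
  rewrite Sd; vexpl; ring.
rewrite !Thetahat_eq /= -/(S x' xi' xh' z') -/(S x1 xi1 xh1 z1).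
have fa := fsub x'; have cb := csub xi'.
rewrite -/dx in fa; rewrite -/dxi in cb.
move: fa cb; rewrite -(fineK ffin) -(fineK cfin).
set fx := fine (f x1); set cx := fine (conjugate g xi1).
case: (f x') => [fy| |]; case: (conjugate g xi') => [cy| |] => //=; rewrite ?leey //.
rewrite -!EFinD !lee_fin => fa cb.
lra.
Qed.

End Frechet.

Unset Implicit Arguments.
Set Strict Implicit.

Theorem lemma3p3 (R : realType) (n : nat)
  (f : 'rV[R]_n -> \bar R) (g hp hm psi : 'rV[R]_n -> R)
  (dhp dhm dpsi : 'rV[R]_n -> 'rV[R]_n)
  (Lhp Lhm rho Lpsi : R)
  (alpha : nat -> R) (alpha_min beta tau eps delta eta : R)
  (x xi : nat -> 'rV[R]_n)
  (* standing setting *)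
  (f_proper : proper_fun f) (f_lsc : lsc_fun f) (f_convex : econvex_fun f)
  (g_convex : convex_fun g) (g_cont : continuous_fun g)
  (hp_grad : has_gradient hp dhp) (hp_lip : lipschitz_with dhp Lhp)
  (hm_grad : has_gradient hm dhm) (hm_lip : lipschitz_with dhm Lhm)
  (Phi_bdd : exists m : R, forall z, (m%:E <= Phi f g hp hm z)%E)
  (psi_grad : has_gradient psi dpsi) (rho_pos : 0 < rho)
  (psi_sc : strongly_convex psi rho) (psi_lip : lipschitz_with dpsi Lpsi)
  (* algorithm parameters *)
  (amin_bnd : 0 < alpha_min < 1)
  (alpha_bnd : forall k, alpha_min <= alpha k <= 1)
  (beta_gt : 1 / 2 < beta) (tau_pos : 0 < tau)
  (* standing parameter choice *)
  (eps_bnd : 0 < eps < 1)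
  (delta_def : delta = (tau * Lpsi - Lhm)
                        / (2 * ((1 - eps) + (1 + eps) * alpha_min ^+ 2)))
  (tau_def : tau = (2 * Lhm ^+ 2 + Lhm + 1 + 2 * (1 + eps) * delta) / (2 * rho))
  (eta_def : eta = (2 * beta - 1) / (2 * (1 + eps)))
  (Lhm_lt : Lhm < tau * Lpsi)
  (* the iterates *)
  (iter : iBPDCA f g hp dhm psi dpsi alpha beta tau x xi)
  (bounded : exists M : R, forall k,
      [/\ vnorm (x k) <= M, vnorm (xi k) <= M & vnorm (xhat x alpha k) <= M]) :
  (forall k, limiting_subdiff (@ip4 R n) (Thetahat f g hp hm delta eta)
               (omegahat x xi alpha k.+1)
               (upsilon x xi alpha dhm dpsi beta tau delta eta k)) /\
  exists2 theta : R, 0 < theta &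
    forall k,
      (dist0 (@ip4 R n)
         (limiting_subdiff (@ip4 R n) (Thetahat f g hp hm delta eta)
                           (omegahat x xi alpha k.+1))
       <= (theta * (vnorm (x k - xhat x alpha k)
                    + vnorm (x k.+1 - xhat x alpha k.+1)
                    + vnorm (xi k.+1 - xi k)))%:E)%E.
Proof.
have am0 : 0 < alpha_min by case/andP: amin_bnd.
have apos k : 0 < alpha k by case/andP: (alpha_bnd k) => h _; lra.
have aid k : (alpha k.+1)^-1 *: (x k.+1 - xhat x alpha k.+1) = x k - x k.+1.
  rewrite /xhat /= opprD addrA subrr add0r scalerN scalerA mulVf ?scale1r ?opprB //.
  by apply: lt0r_neq0; apply: apos.
have xh1E k : x k.+1 - xhat x alpha k.+1 = - (alpha k.+1 *: (x k.+1 - x k)).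
  by rewrite /xhat /= opprD addrA subrr add0r.
have part1 : forall k, limiting_subdiff (@ip4 R n) (Thetahat f g hp hm delta eta)
               (omegahat x xi alpha k.+1)
               (upsilon x xi alpha dhm dpsi beta tau delta eta k).
  move=> k.
  have [ffin fsub] := xstep hm f_proper f_convex hp_grad psi_grad (iter k).2.
  have [cfin csub] := xistep g_convex g_cont (iter k).1.
  have om : omegahat x xi alpha k.+1 = (x k.+1, xi k.+1, xhat x alpha k.+1, xi k) by [].
  have Fr : frechet_subdiff (@ip4 R n) (Thetahat f g hp hm delta eta)
     (omegahat x xi alpha k.+1) (upsilon x xi alpha dhm dpsi beta tau delta eta k).
    rewrite om; apply: (frechet_main hp_grad hm_grad ffin fsub cfin csub).
    move=> dx dxi dxh dz.
    rewrite /upsilon /ip4 /= aid.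
    rewrite ?(vdotBl, vdotDl, vdotNl, vdotZl); ring.
  split; first by case: Fr.
  exists (fun _ => omegahat x xi alpha k.+1), (fun _ => upsilon x xi alpha dhm dpsi beta tau delta eta k).
  have ip0 : ipnorm (@ip4 R n) 0 = 0.
    by rewrite /ipnorm /ip4 /= !vdot0l !addr0 sqrtr0.
  split => //.
  - rewrite subrr ip0; exact: cvg_cst.
  - exact: cvg_cst.
  - rewrite subrr ip0; exact: cvg_cst.
split; first exact: part1.
set K1 := `|Lhm| + `|tau| * `|Lpsi| + 1.
set inv := alpha_min^-1.
have K10 : 0 <= K1 by rewrite /K1; have := normr_ge0 Lhm; have := normr_ge0 tau; have := normr_ge0 Lpsi; nra.
have inv0 : 0 <= inv by rewrite /inv invr_ge0 ltW.
exists (K1 * (1 + inv) + 4 * `|delta| + `|2 * eta - beta| + 2 * `|eta| + 1).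
  have := normr_ge0 delta; have := normr_ge0 eta; have := normr_ge0 (2 * eta - beta).
  have : 0 <= K1 * (1 + inv) by apply: mulr_ge0 => //; lra.
  lra.
move=> k.
set ups := upsilon x xi alpha dhm dpsi beta tau delta eta k.
apply: (@le_trans _ _ (ipnorm (@ip4 R n) ups)%:E).
  by apply: ereal_inf_lbound; exists ups => //; apply: part1.
rewrite lee_fin.
set x1 := x k.+1; set xk := x k; set xhk := xhat x alpha k; set xh1 := xhat x alpha k.+1.
set xi1 := xi k.+1; set xik := xi k.
set A := vnorm (xk - xhk); set B := vnorm (x1 - xh1); set C := vnorm (xi1 - xik).
set M := vnorm (xhk - x1).
have A0 : 0 <= A := vnorm_ge0 _.
have B0 : 0 <= B := vnorm_ge0 _.
have C0 : 0 <= C := vnorm_ge0 _.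
have M0 : 0 <= M := vnorm_ge0 _.
have D1 : vnorm (xk - x1) <= B * inv.
  have : B = alpha k.+1 * vnorm (xk - x1).
    rewrite /B /x1 /xh1 xh1E vnormN vnormZ ger0_norm; last exact: ltW.
    by rewrite vnorm_sym.
  move=> ->; rewrite /inv ler_pdivlMr // mulrC.
  apply: ler_wpM2r; first exact: vnorm_ge0.
  by case/andP: (alpha_bnd k.+1).
have HM : M <= A + B * inv.
  rewrite /M; have -> : xhk - x1 = (xhk - xk) + (xk - x1) by rewrite addrA subrK.
  apply: le_trans (vnormD _ _) _.
  by rewrite vnorm_sym -/A; lra.
have lipm : vnorm (dhm xhk - dhm x1) <= `|Lhm| * M.
  apply: le_trans (hm_lip _ _) _; apply: ler_wpM2r; [exact: vnorm_ge0 | exact: ler_norm].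
have lipp : vnorm (dpsi x1 - dpsi xhk) <= `|Lpsi| * M.
  apply: le_trans (psi_lip _ _) _; rewrite vnorm_sym -/M.
  apply: ler_wpM2r; [exact: vnorm_ge0 | exact: ler_norm].
have ux : vnorm (dhm xhk - dhm x1 + (2 * delta) *: (x1 - xh1) - tau *: (dpsi x1 - dpsi xhk))
          <= `|Lhm| * M + 2 * `|delta| * B + `|tau| * (`|Lpsi| * M).
  apply: le_trans (vnormB _ _) _; rewrite vnormZ.
  have := vnormD (dhm xhk - dhm x1) ((2 * delta) *: (x1 - xh1)); rewrite vnormZ normrM (ger0_norm (x := 2)) // -/B.
  have : `|tau| * vnorm (dpsi x1 - dpsi xhk) <= `|tau| * (`|Lpsi| * M) by apply: ler_wpM2l.
  lra.
have uxi : vnorm (xhk - xk + (alpha k.+1)^-1 *: (x1 - xh1) + (2 * eta - beta) *: (xi1 - xik))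
          <= M + `|2 * eta - beta| * C.
  rewrite /x1 /xh1 aid -/xk -/x1.
  have -> : xhk - xk + (xk - x1) = xhk - x1 by rewrite addrA subrK.
  by apply: le_trans (vnormD _ _) _; rewrite vnormZ -/M -/C.
have uxh : vnorm (- ((2 * delta) *: (x1 - xh1))) = 2 * `|delta| * B.
  by rewrite vnormN vnormZ normrM (ger0_norm (x := 2)).
have uz : vnorm ((2 * eta) *: (xik - xi1)) = 2 * `|eta| * C.
  by rewrite vnormZ normrM (ger0_norm (x := 2)) // vnorm_sym.
have nups : ipnorm (@ip4 R n) ups <=
   vnorm (dhm xhk - dhm x1 + (2 * delta) *: (x1 - xh1) - tau *: (dpsi x1 - dpsi xhk))
   + vnorm (xhk - xk + (alpha k.+1)^-1 *: (x1 - xh1) + (2 * eta - beta) *: (xi1 - xik))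
   + vnorm (- ((2 * delta) *: (x1 - xh1))) + vnorm ((2 * eta) *: (xik - xi1)).
  rewrite /ipnorm /ip4 /ups /upsilon /= -!vnorm_sq.
  by apply: sqrt_sum4; apply: vnorm_ge0.
apply: le_trans nups _.
rewrite uxh uz.
have T1 : K1 * M <= K1 * A + K1 * (B * inv) by rewrite -mulrDr; apply: ler_wpM2l.
have p1 : 0 <= K1 * inv * A by rewrite !mulr_ge0.
have p2 : 0 <= K1 * inv * C by rewrite !mulr_ge0.
have p3 : 0 <= K1 * C by rewrite !mulr_ge0.
have p4 : 0 <= K1 * B by rewrite !mulr_ge0.
have p5 : 0 <= `|delta| * (A + C) by rewrite mulr_ge0 // addr_ge0.
have p6 : 0 <= `|2 * eta - beta| * (A + B) by rewrite mulr_ge0 // addr_ge0.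
have p7 : 0 <= `|eta| * (A + B) by rewrite mulr_ge0 // addr_ge0.
have KM : `|Lhm| * M + `|tau| * (`|Lpsi| * M) + M = K1 * M by rewrite /K1; ring.
rewrite /K1 in T1 p1 p2 p3 p4 KM *.
nra.
Qed.
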